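(* Let $\mathcal{A}$ be a complex Banach algebra with unity and $a,b\in\mathcal{A}$. Then $ab$ is g$\pi$-Hirano invertible if and only if $ba$ is g$\pi$-Hirano invertible.
   Context: $\mathcal{A}^{qnil}$ denotes the set of quasinilpotent elements of $\mathcal{A}$ (spectrum equal to $\{0\}$). An element $a\in\mathcal{A}$ is g$\pi$-Hirano invertible if there exists $x\in\mathcal{A}$ with $xax=x$, $ax=xa$ and $a-a^{n+2}x\in\mathcal{A}^{qnil}$ for some positive integer $n$. *)

(* Defs.v *)
From HB Require Import structures.
From mathcomp Require Import all_boot all_order all_algebra.
From mathcomp Require Import complex reals.
Set Implicit Arguments. Unset Strict Implicit. Unset Printing Implicit Defensive.
Import Order.TTheory GRing.Theory Num.Theory.
Local Open Scope ring_scope.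

Definition banach_algebra_norm (R : realType) (A : unitAlgType R[i])
    (nrm : A -> R) : Prop :=
  [/\ (forall x, 0 <= nrm x),
      (forall x, nrm x = 0 -> x = 0),
      (forall x y, nrm (x + y) <= nrm x + nrm y) /\
      (forall (l : R[i]) x, (nrm (l *: x))%:C%C = `|l| * (nrm x)%:C%C),
      (forall x y, nrm (x * y) <= nrm x * nrm y) &
      (forall u : nat -> A,
         (forall e : R, 0 < e -> exists N, forall m n, (N <= m)%N -> (N <= n)%N ->
             nrm (u m - u n) < e) ->
         exists l : A, forall e : R, 0 < e -> exists N, forall n, (N <= n)%N ->
             nrm (u n - l) < e)].

Definition spectrum (R : realType) (A : unitAlgType R[i]) (a : A) : R[i] -> Prop :=
  fun l => ~ ((l%:A - a) \is a GRing.unit).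

Definition quasinilpotent (R : realType) (A : unitAlgType R[i]) (a : A) : Prop :=
  forall l : R[i], spectrum a l <-> l = 0.

Definition gpi_Hirano_invertible (R : realType) (A : unitAlgType R[i]) (a : A) : Prop :=
  exists x : A, [/\ x * a * x = x, a * x = x * a &
    exists n : nat, (0 < n)%N /\ quasinilpotent (a - a ^+ (n + 2) * x)].

(* Main.v *)
Require Import Defs.
From HB Require Import structures.
From mathcomp Require Import all_boot all_order all_algebra.
From mathcomp Require Import complex reals.
From mathcomp Require Import ring lra.
From mathcomp Require Import classical_sets boolp topology normedtype.
Import Order.TTheory GRing.Theory Num.Theory.
Import numFieldNormedType.Exports.
Set Implicit Arguments. Unset Strict Implicit. Unset Printing Implicit Defensive.
Local Open Scope ring_scope.

Definition nc (R : realType) (z : R[i]) : R := @Normc.normc R z.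

Lemma ncE (R : realType) (z : R[i]) : `|z| = (nc z)%:C%C.
Proof. by case: z => a b; rewrite normc_def. Qed.

Lemma nc_ge0 (R : realType) (z : R[i]) : 0 <= nc z.
Proof. by rewrite -ler0c -ncE normr_ge0. Qed.

Lemma ncM (R : realType) (z w : R[i]) : nc (z * w) = nc z * nc w.
Proof. by apply: complexI; rewrite rmorphM /= -!ncE normrM. Qed.

Lemma ncD (R : realType) (z w : R[i]) : nc (z + w) <= nc z + nc w.
Proof. by rewrite -lecR rmorphD /= -!ncE ler_normD. Qed.

Lemma ncN (R : realType) (z : R[i]) : nc (- z) = nc z.
Proof. by apply: complexI; rewrite -!ncE normrN. Qed.

Lemma ncR (R : realType) (k : R) : nc (k%:C%C) = `|k|.
Proof. apply: complexI; rewrite -!ncE.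
have [k0|k0] := leP 0 k.
  by rewrite !ger0_norm // lecR.
by rewrite !ltr0_norm ?ltcR // rmorphN.
Qed.

Lemma nc1 (R : realType) : nc (1 : R[i]) = 1.
Proof. by have := ncR (1 : R); rewrite normr1. Qed.

Lemma nc_eq0 (R : realType) (z : R[i]) : (nc z == 0) = (z == 0).
Proof.
apply/eqP/eqP => [h|->]; last by have := ncR (0 : R); rewrite normr0.
by apply/eqP; rewrite -normr_eq0 ncE h.
Qed.

Lemma ncX (R : realType) (z : R[i]) n : nc (z ^+ n) = nc z ^+ n.
Proof. elim: n => [|n IH]; first by rewrite !expr0 nc1. by rewrite !exprS ncM IH. Qed.

Lemma ncV (R : realType) (z : R[i]) : nc (z^-1) = (nc z)^-1.
Proof. by apply: complexI; rewrite -!ncE normfV fmorphV. Qed.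

Section NormFacts.
Variables (R : realType) (A : unitAlgType R[i]) (N : A -> R).
Hypothesis hN : banach_algebra_norm N.

Lemma N_ge0 x : 0 <= N x.
Proof. by case: hN => h _ _ _ _; apply: h. Qed.
Lemma N_eq0 x : N x = 0 -> x = 0.
Proof. by case: hN => _ h _ _ _; apply: h. Qed.
Lemma N_add x y : N (x + y) <= N x + N y.
Proof. by case: hN => _ _ [h _] _ _; apply: h. Qed.
Lemma N_scale (l : R[i]) x : N (l *: x) = nc l * N x.
Proof. case: hN => _ _ [_ h] _ _; apply: complexI; by rewrite rmorphM /= -ncE h. Qed.
Lemma N_mul x y : N (x * y) <= N x * N y.
Proof. by case: hN => _ _ _ h _; apply: h. Qed.
Lemma N_opp x : N (- x) = N x.
Proof. by rewrite -scaleN1r N_scale ncN nc1 mul1r. Qed.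
Lemma N_0 : N 0 = 0.
Proof. by rewrite -(scale0r (0 : A)) N_scale -(rmorph0 (real_complex R)) ncR normr0 mul0r. Qed.
Lemma N_sub x y : N (x - y) <= N x + N y.
Proof. by rewrite -(N_opp y) N_add. Qed.
Lemma N_sum (I : Type) (r : seq I) (P : pred I) (F : I -> A) :
  N (\sum_(i <- r | P i) F i) <= \sum_(i <- r | P i) N (F i).
Proof.
elim/big_rec2: _ => [|i y1 y2 _ h]; first by rewrite N_0.
by apply: le_trans (N_add _ _) _; rewrite lerD2l.
Qed.
Lemma N_natmul x n : N (x *+ n) = n%:R * N x.
Proof. by rewrite -scaler_nat N_scale -(rmorph_nat (real_complex R)) ncR normr_nat. Qed.
Lemma N1_gt0 : 0 < N 1.
Proof.
rewrite lt_def N_ge0 andbT; apply/eqP => /N_eq0 /eqP; by rewrite oner_eq0.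
Qed.
End NormFacts.

Section Resolvent.
Variables (R : realType) (A : unitAlgType R[i]) (N : A -> R).
Hypothesis hN : banach_algebra_norm N.
Variable x : A.
Hypothesis Hu : forall mu : R[i], (1 - mu *: x) \is a GRing.unit.

Definition hh (mu : R[i]) : A := (1 - mu *: x)^-1.

Lemma hh0 : hh 0 = 1.
Proof. by rewrite /hh scale0r subr0 invr1. Qed.

Lemma hh_res a b : hh a - hh b = (a - b) *: (hh a * x * hh b).
Proof.
have E1 : hh a * (1 - a *: x) = 1 by rewrite mulVr.
have E2 : (1 - b *: x) * hh b = 1 by rewrite mulrV.
have -> : hh a - hh b = hh a * ((1 - b *: x) - (1 - a *: x)) * hh b.
  by rewrite mulrBr mulrBl E1 -mulrA E2 mulr1 mul1r.
by rewrite opprB [_ + (_ - 1)]addrC addrA subrK -scalerBl -scalerAr !scalerAl.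
Qed.

Lemma hh_local a b : nc (b - a) * N x * N (hh a) <= 2^-1 ->
  N (hh b) <= 2 * N (hh a) /\ N (hh b - hh a) <= 2 * nc (b - a) * N x * N (hh a) ^+ 2.
Proof.
move=> hsmall.
have Hd : N (hh b - hh a) <= nc (b - a) * N x * N (hh a) * N (hh b).
  rewrite hh_res N_scale //.
  apply: le_trans (_ : nc (b - a) * (N (hh b) * N x * N (hh a)) <= _).
    apply: ler_wpM2l; first exact: nc_ge0.
    apply: le_trans (N_mul hN _ _) _; apply: ler_wpM2r; first exact: N_ge0.
    exact: N_mul.
  by rewrite !mulrA [_ * N (hh b)]mulrC -!mulrA [N (hh b) * _]mulrC !mulrA mulrAC.
have Hb : N (hh b) <= 2 * N (hh a).
  have : N (hh b) <= N (hh a) + N (hh b - hh a).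
    by rewrite -{1}(subrK (hh a) (hh b)) addrC N_add.
  move=> h1.
  have h2 : N (hh b - hh a) <= 2^-1 * N (hh b).
    apply: le_trans Hd _; apply: ler_wpM2r => //; exact: N_ge0.
  have := N_ge0 hN (hh b); lra.
split => //.
apply: le_trans Hd _.
rewrite [X in _ <= X](_ : _ = nc (b - a) * N x * N (hh a) * (2 * N (hh a))); last by ring.
by apply: ler_wpM2l => //; rewrite ?mulr_ge0 ?nc_ge0 ?N_ge0.
Qed.
End Resolvent.

Section Chain.
Variables (R : realType) (A : unitAlgType R[i]) (N : A -> R).
Hypothesis hN : banach_algebra_norm N.
Variable x : A.
Hypothesis Hu : forall mu : R[i], (1 - mu *: x) \is a GRing.unit.
Variables (Rad M : R).
Hypothesis M0 : 0 <= M.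
Hypothesis HM : forall mu, nc mu <= Rad -> N (hh x mu) <= M.
Variables (n : nat) (om : R[i]).
Hypothesis n0 : (0 < n)%N.
Hypothesis omn : om ^+ n = 1.
Hypothesis om1 : om != 1.

Local Notation h := (hh x).
Definition F (rho : R) : A := \sum_(0 <= k < n) h (rho%:C%C * om ^+ k).
Local Notation K := (M * N x * (M * N x * M)).

Lemma nc_om : nc om = 1.
Proof.
apply/eqP; rewrite -(pexpr_eq1 n0 (nc_ge0 om)) -ncX omn; exact/eqP/nc1.
Qed.

Lemma nc_omX k : nc (om ^+ k) = 1.
Proof. by rewrite ncX nc_om expr1n. Qed.

Lemma N_hxh a b : nc a <= Rad -> nc b <= Rad -> N (h a * x * h b) <= M * N x * M.
Proof.
move=> ha hb.
apply: le_trans (N_mul hN _ _) _.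
apply: ler_pM; rewrite ?mulr_ge0 ?N_ge0 //; last exact: HM.
apply: le_trans (N_mul hN _ _) _.
by apply: ler_pM; rewrite ?N_ge0 //; apply: HM.
Qed.

Lemma keyN a b c : nc a <= Rad -> nc b <= Rad -> nc c <= Rad ->
  N (h a * x * (h b - h c)) <= M * N x * (nc (b - c) * (M * N x * M)).
Proof.
move=> ha hb hc.
rewrite hh_res //.
apply: le_trans (N_mul hN _ _) _.
apply: ler_pM; rewrite ?mulr_ge0 ?N_ge0 ?nc_ge0 //.
  apply: le_trans (N_mul hN _ _) _.
  by apply: ler_pM; rewrite ?N_ge0 //; apply: HM.
by rewrite N_scale //; apply: ler_wpM2l; [exact: nc_ge0| exact: N_hxh].
Qed.

Lemma sum_T0 (rho : R) : rho != 0 ->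
  \sum_(0 <= k < n) om ^+ k *: (h (rho%:C%C * om ^+ k) * x * h (rho%:C%C * om ^+ k.+1)) = 0.
Proof.
move=> r0.
set c := rho%:C%C * (1 - om).
have c0 : c != 0.
  rewrite mulf_neq0 //; first by rewrite -nc_eq0 ncR normr_eq0.
  by rewrite subr_eq0 eq_sym.
apply: (@scalerI _ _ c c0); rewrite scaler0 scaler_sumr.
have -> : \sum_(0 <= k < n) c *: (om ^+ k *: (h (rho%:C%C * om ^+ k) * x * h (rho%:C%C * om ^+ k.+1)))
   = - \sum_(0 <= k < n) (h (rho%:C%C * om ^+ k.+1) - h (rho%:C%C * om ^+ k)).
  rewrite -sumrN; apply: eq_bigr => k _.
  rewrite opprB hh_res // scalerA; congr (_ *: _).
  by rewrite /c exprS; ring.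
rewrite (telescope_sumr (fun k => h (rho%:C%C * om ^+ k))) // omn expr0 subrr oppr0 //.
Qed.

Lemma step (rho rho' : R) : 0 < rho -> rho <= Rad -> 0 <= rho' -> rho' <= Rad ->
  N (F rho - F rho') <= n%:R * (`|rho - rho'| * (K * (`|rho - rho'| + rho * nc (1 - om)))).
Proof.
move=> r0 rR r'0 r'R.
have ncA r k : 0 <= r -> nc (r%:C%C * om ^+ k) = r.
  by move=> hr; rewrite ncM nc_omX mulr1 ncR ger0_norm.
have E : F rho - F rho' = (rho - rho')%:C%C *: \sum_(0 <= k < n) om ^+ k *:
    (h (rho%:C%C * om ^+ k) * x * (h (rho'%:C%C * om ^+ k) - h (rho%:C%C * om ^+ k.+1))).
  rewrite /F -sumrB.
  have -> : \sum_(0 <= k < n) (h (rho%:C%C * om ^+ k) - h (rho'%:C%C * om ^+ k)) =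
     (rho - rho')%:C%C *: \sum_(0 <= k < n) om ^+ k *: (h (rho%:C%C * om ^+ k) * x * h (rho'%:C%C * om ^+ k)).
    rewrite scaler_sumr; apply: eq_bigr => k _; rewrite hh_res // scalerA; congr (_ *: _).
    by rewrite rmorphB /=; ring.
  congr (_ *: _).
  have T0 := sum_T0 (lt0r_neq0 r0).
  rewrite -[LHS]subr0 -[X in _ - X = _]T0 -sumrB; apply: eq_bigr => k _.
  by rewrite -scalerBr mulrBr.
rewrite E N_scale // ncR.
rewrite [X in _ <= X]mulrCA; apply: ler_wpM2l; first exact: normr_ge0.
apply: le_trans (N_sum hN _ _ _) _.
set B := K * (`|rho - rho'| + rho * nc (1 - om)).
have Hk : forall k, (0 <= k < n)%N -> N (om ^+ k *: (h (rho%:C%C * om ^+ k) * x *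
    (h (rho'%:C%C * om ^+ k) - h (rho%:C%C * om ^+ k.+1)))) <= B.
  move=> k _; rewrite N_scale // nc_omX mul1r.
  apply: le_trans (keyN _ _ _) _; rewrite ?ncA ?(ltW r0) //.
  have -> : rho'%:C%C * om ^+ k - rho%:C%C * om ^+ k.+1 = om ^+ k * ((rho' - rho)%:C%C + rho%:C%C * (1 - om)).
    by rewrite exprS rmorphB /=; ring.
  rewrite ncM nc_omX mul1r.
  have hd : nc ((rho' - rho)%:C%C + rho%:C%C * (1 - om)) <= `|rho - rho'| + rho * nc (1 - om).
    apply: le_trans (ncD _ _) _; rewrite ncM !ncR distrC (ger0_norm (ltW r0)) //.
  rewrite /B [X in X <= _](_ : _ = K * nc ((rho' - rho)%:C%C + rho%:C%C * (1 - om))); last by ring.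
  by apply: ler_wpM2l => //; rewrite ?mulr_ge0 ?N_ge0.
apply: le_trans (ler_sum_nat Hk) _.
by rewrite sumr_const_nat subn0 mulr_natl.
Qed.

Lemma chain (m : nat) : (0 < m)%N -> 0 < Rad ->
  N (F Rad - F 0) <= n%:R * (Rad * (K * (Rad / m%:R + Rad * nc (1 - om)))).
Proof.
move=> m0 R0.
have mR : 0 < (m%:R : R) by rewrite ltr0n.
pose r (j : nat) : R := Rad * j%:R / m%:R.
have rm : r m = Rad by rewrite /r mulfK // gt_eqF.
have r0 : r 0%N = 0 by rewrite /r mulr0 mul0r.
have -> : F Rad - F 0 = \sum_(0 <= j < m) (F (r j.+1) - F (r j)).
  by rewrite (telescope_sumr (fun j => F (r j))) // rm r0.
apply: le_trans (N_sum hN _ _ _) _.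
set B := n%:R * (Rad / m%:R * (K * (Rad / m%:R + Rad * nc (1 - om)))).
have K0 : 0 <= K by rewrite ?mulr_ge0 ?N_ge0.
have Hj : forall j, (0 <= j < m)%N -> N (F (r j.+1) - F (r j)) <= B.
  move=> j /andP [_ jm].
  have rS : r j.+1 - r j = Rad / m%:R by rewrite /r -mulrBl -mulrBr -natrB // subSnn mulr1.
  have rpos : 0 < r j.+1 by rewrite /r divr_gt0 // mulr_gt0 // ltr0n.
  have rle : forall i, (i <= m)%N -> r i <= Rad.
    by move=> i im; rewrite /r ler_pdivrMr // ler_pM2l // ler_nat.
  have rge : 0 <= r j by rewrite /r divr_ge0 // ?mulr_ge0 // ?(ltW R0) // ltW.
  apply: le_trans (step rpos (rle _ jm) rge (rle _ (ltnW jm))) _.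
  rewrite rS ger0_norm; last by rewrite divr_ge0 // ltW.
  rewrite /B; apply: ler_wpM2l => //; apply: ler_wpM2l; first by rewrite divr_ge0 // ltW.
  apply: ler_wpM2l => //; rewrite lerD2l; apply: ler_wpM2r; [exact: nc_ge0| exact: rle].
apply: le_trans (ler_sum_nat Hj) _.
rewrite sumr_const_nat subn0 /B -mulr_natl.
rewrite [X in X <= _](_ : _ = n%:R * (Rad * (K * (Rad / m%:R + Rad * nc (1 - om)))) * (m%:R / m%:R)).
  by rewrite divff ?mulr1 // gt_eqF.
by rewrite mulrA; ring.
Qed.
End Chain.

Lemma ncsq (R : realType) (z : R[i]) : nc z ^+ 2 = complex.Re z ^+ 2 + complex.Im z ^+ 2.
Proof. by case: z => a b; rewrite /nc /= sqr_sqrtr // addr_ge0 ?sqr_ge0. Qed.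

Lemma Re_sqrtc_ge0 (R : realType) (w : R[i]) : 0 <= complex.Re (sqrtc w).
Proof. by case: w => a b; rewrite /sqrtc /= sqrtr_ge0. Qed.

Lemma aux_ns (R : realType) (s : R[i]) : 0 <= complex.Re s -> nc s ^+ 2 = 1 -> 2 <= nc (1 + s) ^+ 2.
Proof. rewrite !ncsq; case: s => a b /= Ha hab; nra. Qed.

Definition omj (R : realType) (j : nat) : R[i] := iter j (@sqrtc R) (-1).

Lemma omj_pow (R : realType) j : omj R j ^+ (2 ^ j.+1) = 1.
Proof.
elim: j => [|j IH]; first by rewrite /omj /= expr2 mulrNN mulr1.
by rewrite /omj iterS -/(omj R j) expnS exprM sqr_sqrtc IH.
Qed.

Lemma omj_neq1 (R : realType) j : omj R j != 1.
Proof.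
elim: j => [|j IH].
  rewrite /omj /=; apply/eqP => h.
  have : (2%:R : R[i]) == 0 by rewrite -[2%:R]/(1 + 1) -{1}h addNr.
  by rewrite pnatr_eq0.
apply: contra IH; rewrite /omj iterS -/(omj R j) => /eqP h.
by rewrite -[omj R j]sqr_sqrtc h expr1n.
Qed.

Lemma omj_close (R : realType) j : nc (1 - omj R j) ^+ 2 <= 4 / (2 ^ j)%:R.
Proof.
elim: j => [|j IH].
  rewrite ncsq /= expn0 divr1; lra.
rewrite /omj iterS -/(omj R j).
set w := omj R j; set s := sqrtc w.
have hs : s ^+ 2 = w by apply: sqr_sqrtc.
have nw : nc w = 1.
  apply/eqP; rewrite -(pexpr_eq1 (expn_gt0 2 j.+1) (nc_ge0 w)) -ncX omj_pow; exact/eqP/nc1.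
have ns : nc s ^+ 2 = 1 by rewrite -ncX hs nw.
have Rs := Re_sqrtc_ge0 w.
have e1 : 1 - w = (1 - s) * (1 + s) by rewrite -hs; ring.
have n1s : 2 <= nc (1 + s) ^+ 2.
  exact: aux_ns.
move: IH; rewrite -/w e1 ncM exprMn => IH.
rewrite expnS natrM.
have p2 : 0 < ((2 ^ j)%:R : R) by rewrite ltr0n expn_gt0.
have h0 : 0 <= nc (1 - s) ^+ 2 by rewrite sqr_ge0.
rewrite ler_pdivlMr ?mulr_gt0 // .
move: IH; rewrite ler_pdivlMr // => IH.
nra.
Qed.

Lemma roots_close (R : realType) (e : R) : 0 < e ->
  exists n (om : R[i]), [/\ (0 < n)%N, om ^+ n = 1, om != 1 & nc (1 - om) <= e].
Proof.
move=> e0.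
set j := (Num.truncn (4 / e ^+ 2)).+1.
exists (2 ^ j.+1)%N, (omj R j); split; [by rewrite expn_gt0| exact: omj_pow| exact: omj_neq1|].
have h1 := omj_close R j.
have h2 : 4 / e ^+ 2 < j%:R by apply: truncnS_gt.
have h3 : (j%:R : R) <= (2 ^ j)%:R by rewrite ler_nat ltnW // ltn_expl.
have e2 : 0 < e ^+ 2 by rewrite exprn_gt0.
have h4 : 4 / (2 ^ j)%:R <= e ^+ 2.
  have pj : 0 < ((2 ^ j)%:R : R) by rewrite ltr0n expn_gt0.
  rewrite ler_pdivrMr //; move: h2; rewrite ltr_pdivrMr // => h2; nra.
have h5 := nc_ge0 (1 - omj R j).
nra.
Qed.

Lemma nc_cplx (R : realType) (a b : R) : nc (a +i* b)%C <= `|a| + `|b|.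
Proof.
have h0 := nc_ge0 (a +i* b)%C.
have h1 : nc (a +i* b)%C ^+ 2 = a ^+ 2 + b ^+ 2 := ncsq _.
have ha := real_normK (num_real a); have hb := real_normK (num_real b).
have := normr_ge0 a; have := normr_ge0 b; nra.
Qed.

Lemma Re_le_nc (R : realType) (z : R[i]) : `|complex.Re z| <= nc z.
Proof.
have h0 := nc_ge0 z; have h1 := ncsq z.
have ha := real_normK (num_real (complex.Re z)); have := normr_ge0 (complex.Re z).
have := sqr_ge0 (complex.Im z); nra.
Qed.

Lemma Im_le_nc (R : realType) (z : R[i]) : `|complex.Im z| <= nc z.
Proof.
have h0 := nc_ge0 z; have h1 := ncsq z.
have ha := real_normK (num_real (complex.Im z)); have := normr_ge0 (complex.Im z).
have := sqr_ge0 (complex.Re z); nra.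
Qed.

Lemma unitZ (R : realType) (A : unitAlgType R[i]) (k : R[i]) (z : A) :
  k != 0 -> z \is a GRing.unit -> k *: z \is a GRing.unit.
Proof.
move=> k0 zu; apply/unitrP; exists (k^-1 *: z^-1); split.
  by rewrite -scalerAl -scalerAr scalerA mulVf // mulVr // scale1r.
by rewrite -scalerAl -scalerAr scalerA mulfV // mulrV // scale1r.
Qed.

Lemma N_dist (R : realType) (A : unitAlgType R[i]) (N : A -> R) (hN : banach_algebra_norm N) u v :
  `|N u - N v| <= N (u - v).
Proof.
have h1 : N u <= N (u - v) + N v by rewrite -{1}(subrK v u) N_add.
have h2 : N v <= N (u - v) + N u.
  by rewrite -(N_opp hN (u - v)) opprB -{1}(subrK u v) N_add.
by rewrite ler_norml; apply/andP; split; lra.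
Qed.



Local Open Scope classical_set_scope.
Lemma bounded_on_square (R : realType) (g : R -> R -> R) (Rad : R) :
  (forall s t (e : R), 0 < e -> exists2 d : R, 0 < d & forall s' t',
      `|s' - s| < d -> `|t' - t| < d -> `|g s' t' - g s t| < e) ->
  exists M : R, forall s t, `|s| <= Rad -> `|t| <= Rad -> g s t <= M.
Proof.
move=> gc.
set G := fun p : R * R => g p.1 p.2.
have Gc : continuous (G : (R * R)%type -> R).
  move=> [s t]; apply/cvgrPdist_lt => e e0.
  have [d d0 Hd] := gc s t e e0.
  exists ([set s' | `|s' - s| < d], [set t' | `|t' - t| < d]); first split.
  - by apply/nbhs_ballP; exists d => // x; rewrite -ball_normE /= distrC.
  - by apply/nbhs_ballP; exists d => // x; rewrite -ball_normE /= distrC.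
  by move=> [s' t'] [/= h1 h2]; rewrite distrC; apply: Hd.
have K : compact (`[-Rad, Rad] `*` `[-Rad, Rad]).
  by apply: compact_setX; apply: segment_compact.
have /compact_bounded [M [Mr HM]] := continuous_compact (continuous_subspaceT Gc) K.
exists (M + 1) => s t hs ht.
have : (G @` (`[-Rad, Rad] `*` `[-Rad, Rad])) (G (s, t)).
  exists (s, t) => //; split; rewrite /= in_itv /= -ler_norml //.
move/(HM (M + 1)); rewrite ltrDl ltr01 => /(_ isT) /=.
by move=> h; apply: le_trans h; apply: ler_norm.
Qed.

Local Close Scope classical_set_scope.

Lemma gelfand (R : realType) (A : unitAlgType R[i]) (N : A -> R)
  (hN : banach_algebra_norm N) (w : A) :
  (forall l : R[i], (l%:A - w) \is a GRing.unit) -> False.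
Proof.
move=> Hw.
have Hu : forall mu : R[i], (1 - mu *: w) \is a GRing.unit.
  move=> mu; have [->|mu0] := eqVneq mu 0; first by rewrite scale0r subr0 unitr1.
  have -> : 1 - mu *: w = mu *: (mu^-1%:A - w) by rewrite scalerBr scalerA mulfV // scale1r.
  exact: unitZ.
have wu : w \is a GRing.unit by have := Hw 0; rewrite scale0r add0r unitrN.
set y := w^-1.
have yw : y * w = 1 by rewrite mulVr.
have N1p := N1_gt0 hN.
have Ny0 : 0 <= N y := N_ge0 hN y.
have HB2 : forall mu, 2 * N y <= nc mu -> 0 < nc mu -> N (hh w mu) <= 2 * N y / nc mu.
  move=> mu h1 h2; set z := hh w mu.
  have e1 : (1 - mu *: w) * z = 1 by rewrite mulrV.
  have e : y * z - mu *: z = y.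
    move: e1 => /(congr1 (fun t => y * t)); rewrite mulr1 mulrA mulrBr mulr1 -scalerAr yw.
    by rewrite mulrBl -scalerAl !mul1r.
  have e2 : mu *: z = y * z - y by rewrite -[X in _ - X]e opprB addrC subrK.
  have h3 : nc mu * N z <= N y * N z + N y.
    rewrite -N_scale // e2; apply: le_trans (N_sub hN _ _) _; rewrite lerD2r; exact: N_mul.
  have h4 := N_ge0 hN z.
  rewrite ler_pdivlMr //; nra.
set X := N w.
have X0 : 0 <= X := N_ge0 hN w.
pose g (s t : R) := N (hh w (s +i* t)%C).
have gc : forall s t (e : R), 0 < e -> exists2 d : R, 0 < d & forall s' t',
      `|s' - s| < d -> `|t' - t| < d -> `|g s' t' - g s t| < e.
  move=> s t e e0.
  set K0 := N (hh w (s +i* t)%C).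
  have K00 : 0 <= K0 := N_ge0 hN _.
  set P := X * K0.
  have P0 : 0 <= P by rewrite mulr_ge0.
  set D1 := 4 * (P + 1); set D2 := 4 * (P * K0 + 1).
  have D10 : 0 < D1 by rewrite /D1; nra.
  have D20 : 0 < D2 by rewrite /D2; nra.
  pose d := Num.min (1 / D1) (e / D2).
  have d0 : 0 < d by rewrite lt_min !divr_gt0.
  exists d => //.
  move=> s' t' hs ht.
  have d1 : d * D1 <= 1 by rewrite -ler_pdivlMr // ge_min lexx.
  have d2 : d * D2 <= e by rewrite -ler_pdivlMr // ge_min lexx orbT.
  pose a := (s +i* t)%C; pose b := (s' +i* t')%C.
  have hnc : nc (b - a) <= `|s' - s| + `|t' - t| := nc_cplx (s' - s) (t' - t).
  have hl := @hh_local R A N hN w Hu a b.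
  rewrite -/K0 in hl.
  move: (nc (b - a)) (nc_ge0 (b - a)) hnc hl => c c0 hnc hl.
  have hc : c < 2 * d by lra.
  have hsmall : c * X * K0 <= 2^-1.
    have : c * P <= 2 * d * P by apply: ler_wpM2r => //; exact: ltW.
    move=> hcp; rewrite /D1 /P in d1 hcp; nra.
  have [_ {}hl] := hl hsmall.
  apply: le_lt_trans (N_dist hN _ _) _.
  apply: le_lt_trans hl _.
  have : c * (P * K0) <= 2 * d * (P * K0) by apply: ler_wpM2r; rewrite ?mulr_ge0 // ltW.
  rewrite /D2 in d2; rewrite /P => hh1.
  have hpk : 0 <= X * K0 * K0 by rewrite !mulr_ge0.
  rewrite /P in d2; rewrite expr2 -/X; nra.
set Rad := 8 * N y / N 1 + 2 * N y + 1.
have [M HM0] := @bounded_on_square R g Rad gc.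
have q0 : 0 <= 8 * N y / N 1 by rewrite divr_ge0 ?mulr_ge0 // ltW.
have Rad0 : 0 < Rad by rewrite /Rad; lra.
have RadNy : 2 * N y <= Rad by rewrite /Rad; lra.
have RadN1 : 8 * N y <= Rad * N 1.
  have -> : Rad * N 1 = 8 * N y + (2 * N y + 1) * N 1 by rewrite /Rad; field; rewrite gt_eqF.
  have : 0 <= (2 * N y + 1) * N 1 by apply: mulr_ge0; [lra | exact: ltW].
  lra.
have nc0 : nc (0 : R[i]) = 0 by apply/eqP; rewrite nc_eq0.
have HM : forall mu, nc mu <= Rad -> N (hh w mu) <= M.
  case=> p q hmu; apply: HM0.
    exact: (le_trans (Re_le_nc (p +i* q)%C) hmu).
  exact: (le_trans (Im_le_nc (p +i* q)%C) hmu).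
have M0 : 0 <= M.
  have := HM 0; rewrite hh0 nc0 => h; exact: le_trans (ltW N1p) (h (ltW Rad0)).
set K := M * N w * (M * N w * M).
have K0 : 0 <= K by rewrite /K !mulr_ge0 // N_ge0.
set Q := Rad * K * Rad.
have Q0 : 0 <= Q by rewrite /Q !mulr_ge0 // ltW.
set C := Q + 1.
have C0 : 0 < C by rewrite /C; lra.
have eps0 : 0 < N 1 / (8 * C) by rewrite divr_gt0 // mulr_gt0.
have [n [om [n0 omn om1 hom]]] := roots_close eps0.
set m := (Num.truncn (8 * C / N 1)).+1.
have m0 : (0 < m)%N by [].
have hm : 8 * C / N 1 < m%:R := truncnS_gt _.
have mR : 0 < (m%:R : R) by rewrite ltr0n.
have ch := @chain R A N hN w Hu Rad M M0 HM n om n0 omn om1 m m0 Rad0.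
have F0 : F w n om 0 = 1 *+ n.
  rewrite /F (eq_bigr (fun _ => 1)) ?sumr_const_nat ?subn0 // => k _.
  by rewrite (rmorph0 (real_complex R)) mul0r hh0.
have FR : N (F w n om Rad) <= n%:R * (2 * N y / Rad).
  apply: le_trans (N_sum hN _ _ _) _.
  have hk : forall k, (0 <= k < n)%N -> N (hh w (Rad%:C%C * om ^+ k)) <= 2 * N y / Rad.
    move=> k _.
    have e : nc (Rad%:C%C * om ^+ k) = Rad by rewrite ncM (nc_omX n0 omn) mulr1 ncR ger0_norm // ltW.
    by have := HB2 (Rad%:C%C * om ^+ k); rewrite e; apply.
  apply: le_trans (ler_sum_nat hk) _.
  by rewrite sumr_const_nat subn0 (mulr_natl (2 * N y / Rad) n).
have tri : N (F w n om 0) <= N (F w n om Rad - F w n om 0) + N (F w n om Rad).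
  rewrite -(N_opp hN (F w n om Rad - F w n om 0)) opprB.
  by rewrite -{1}(subrK (F w n om Rad) (F w n om 0)) N_add.
have hF0 : N (F w n om 0) = n%:R * N 1 by rewrite F0 N_natmul.
rewrite hF0 in tri.
have t1 : Rad * (K * (Rad / m%:R)) <= N 1 / 8.
  rewrite mulrA mulrA -/Q ler_pdivrMr // mulrC mulrA ler_pdivlMr //.
  move: hm; rewrite ltr_pdivrMr // /C; lra.
have t2 : Rad * (K * (Rad * nc (1 - om))) <= N 1 / 8.
  have hnc := nc_ge0 (1 - om).
  move: hom; rewrite ler_pdivlMr ?mulr_gt0 // => hom.
  rewrite mulrA mulrA -/Q.
  rewrite /C in hom; nra.
have t3 : 2 * N y / Rad <= N 1 / 4.
  by rewrite ler_pdivrMr //; nra.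
have nR : 0 < (n%:R : R) by rewrite ltr0n.
have t12 : Rad * (K * (Rad / m%:R + Rad * nc (1 - om))) <= N 1 / 4.
  rewrite mulrDr mulrDr; lra.
have u1 := ler_wpM2l (ltW nR) t12.
have u3 := ler_wpM2l (ltW nR) t3.
have a1 := le_trans ch u1.
have b1 := le_trans FR u3.
move: tri a1 b1.
set a := N (F w n om Rad - F w n om 0).
set b := N (F w n om Rad).
move=> tri a1 b1.
clear -tri a1 b1 nR N1p.
nra.
Qed.



Lemma jac (R : realType) (A : unitAlgType R[i]) (u v : A) (l : R[i]) :
  l != 0 -> (l%:A - u * v) \is a GRing.unit -> (l%:A - v * u) \is a GRing.unit.
Proof.
move=> l0 hu; set t := (l%:A - u * v)^-1.
have e1 : (l%:A - u * v) * t = 1 by rewrite mulrV.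
have e2 : t * (l%:A - u * v) = 1 by rewrite mulVr.
have k1 : v * u * (v * t * u) = l *: (v * t * u) - v * u.
  have := congr1 (fun z => v * z * u) e1; rewrite /= mulr1 mulrBl mulr_algl.
  rewrite mulrBr mulrBl -scalerAr -scalerAl !mulrA => h.
  by rewrite -[X in _ = _ - X]h opprB addrC subrK.
have k2 : v * t * u * (v * u) = l *: (v * t * u) - v * u.
  have := congr1 (fun z => v * z * u) e2; rewrite /= mulr1 mulrBr mulr_algr.
  rewrite mulrBr mulrBl -scalerAr -scalerAl !mulrA => h.
  by rewrite -[X in _ = _ - X]h opprB addrC subrK.
apply/unitrP; exists (l^-1 *: (1 + v * t * u)); split.
  rewrite -scalerAl mulrDl mul1r mulrBr mulr_algr k2.
  have -> : l *: (v*t*u) - (l *: (v*t*u) - v*u) = v*u by rewrite opprB addrCA subrr addr0.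
  by rewrite subrK scalerA mulVf // scale1r.
rewrite -scalerAr mulrDr mulr1 mulrBl mulr_algl k1.
have -> : l *: (v*t*u) - (l *: (v*t*u) - v*u) = v*u by rewrite opprB addrCA subrr addr0.
by rewrite subrK scalerA mulVf // scale1r.
Qed.

Lemma qn_transfer (R : realType) (A : unitAlgType R[i]) (N : A -> R)
  (hN : banach_algebra_norm N) (u v : A) :
  quasinilpotent (v * u) -> quasinilpotent (u * v).
Proof.
move=> H l; split.
  move=> hs; have [//|l0] := eqVneq l 0; exfalso; apply: hs.
  apply: jac => //.
  apply/negPn/negP => /negP hn.
  by have := (proj1 (H l)) hn; move/eqP; rewrite (negPf l0).
move=> hl0 hu; rewrite hl0 in hu.
apply: (@gelfand R A N hN (u * v)) => l'.
have [->|l0] := eqVneq l' 0; first exact: hu.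
apply: jac => //.
apply/negPn/negP => /negP hn.
by have := (proj1 (H l')) hn; move/eqP; rewrite (negPf l0).
Qed.

Lemma exprS_swap (A : pzRingType) (a b : A) k : (b * a) ^+ k * b = b * (a * b) ^+ k.
Proof.
elim: k => [|k IH]; first by rewrite !expr0 mul1r mulr1.
by rewrite exprS -mulrA IH exprS !mulrA.
Qed.

Lemma alg_half (T : pzRingType) (a b x : T) (n : nat) :
  x * (a * b) * x = x -> a * b * x = x * (a * b) ->
  let y := b * x ^+ 2 * a in
  let v := (1 - (a * b) ^+ (n + 2) * x * x) * a in
  [/\ y * (b * a) * y = y, b * a * y = y * (b * a),
      b * a - (b * a) ^+ (n + 2) * y = b * v &
      v * b = a * b - (a * b) ^+ (n + 2) * x].
Proof.
move=> h1 h2 y v.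
set c := a * b in h1 h2 v *.
have xxc : x * x * c = x by rewrite -mulrA -h2 mulrA.
have cxx : c * x * x = x by rewrite h2.
split.
- rewrite /y expr2.
  have -> : b * (x * x) * a * (b * a) * (b * (x * x) * a) = b * (x * x * c * (c * x * x)) * a.
    by rewrite /c !mulrA.
  by rewrite xxc cxx.
- rewrite /y expr2.
  have -> : b * a * (b * (x * x) * a) = b * (c * x * x) * a by rewrite /c !mulrA.
  have -> : b * (x * x) * a * (b * a) = b * (x * x * c) * a by rewrite /c !mulrA.
  by rewrite xxc cxx.
- rewrite /v /y.
  have -> : (b * a) ^+ (n + 2) * (b * x ^+ 2 * a) = b * (c ^+ (n + 2) * x * x) * a.
    by rewrite expr2 !mulrA exprS_swap /c ?mulrA.
  by rewrite [RHS]mulrA mulrBr mulr1 mulrBl.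
- rewrite /v -mulrA -/c mulrBl mul1r.
  have -> : c ^+ (n + 2) * x * x * c = c ^+ (n + 2) * (x * x * c) by rewrite !mulrA.
  by rewrite xxc.
Qed.

Lemma half (R : realType) (A : unitAlgType R[i]) (N : A -> R)
  (hN : banach_algebra_norm N) (a b : A) :
  gpi_Hirano_invertible (a * b) -> gpi_Hirano_invertible (b * a).
Proof.
move=> [x [h1 h2 [n [n0 hq]]]].
have [e1 e2 e3 e4] := alg_half n h1 h2.
exists (b * x ^+ 2 * a); split => //.
exists n; split => //.
rewrite e3; apply: (qn_transfer hN); rewrite e4; exact: hq.
Qed.

Theorem lemma4p4 (R : realType) (A : unitAlgType R[i]) (nrm : A -> R)
    (hA : banach_algebra_norm nrm) (a b : A) :
  gpi_Hirano_invertible (a * b) <-> gpi_Hirano_invertible (b * a).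
Proof. split => H; [exact: (half hA H) | exact: (half hA H)]. Qed.
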